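(* Let $p:\mathscr{E}\to\mathscr{B}$ be a monoidal closed refinement system which is also a bifibration. Let $R$ be an object of $\mathscr{E}$ with $p(R)=A$, let $S$ be an object of $\mathscr{E}$ with $p(S)=B$, and let $f:A\to B$ be a morphism of $\mathscr{B}$. Then there are isomorphisms in the fibres $$ f_!(R)\;\cong\; eval_!\big(R\otimes [f]\big) \qquad\text{and}\qquad f^*(S)\;\cong\; dni^*\big(S / [f]\big).$$ Here $eval:A\otimes(A\multimap B)\to B$ is the left evaluation map, and $dni:A\to B/(A\multimap B)$ is the right currying of $eval$.
   Context: A monoidal closed refinement system is a functor $p:\mathscr{E}\to\mathscr{B}$ between monoidal closed categories that preserves the monoidal closed structure up to coherent isomorphism. In a monoidal closed category: - $A\multimap B$ denotes the left internal hom, with $\hom(A\otimes X,B)\cong\hom(X,A\multimap B)$; - $B/C$ denotes the right internal hom, with $\hom(X\otimes C,B)\cong\hom(X,B/C)$. For a morphism $f:A\to B$ of $\mathscr{B}$, $curry(f):I\to A\multimap B$ is the morphism corresponding to $f$ under $A\otimes I\cong A$. Since $p$ is a bifibration, every morphism $f:A\to B$ of $\mathscr{B}$ has: - a pushforward $f_!$, sending each $R$ with $p(R)=A$ to $f_!R$ with $p(f_!R)=B$, such that morphisms $f_!R\to R'$ over $g$ correspond bijectively to morphisms $R\to R'$ over $g\circ f$; - a pullback $f^*$, sending each $S$ with $p(S)=B$ to $f^*S$ with $p(f^*S)=A$, such that morphisms $S'\to f^*S$ over $e$ correspond bijectively to morphisms $S'\to S$ over $f\circ e$. The graph of $f$ is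 $[f]:=curry(f)_!(I)$, where $I$ is the monoidal unit of $\mathscr{E}$ (lying over the unit of $\mathscr{B}$). It lies over $A\multimap B$. Hence $R\otimes[f]$ lies over $A\otimes(A\multimap B)$, and $S/[f]$ lies over $B/(A\multimap B)$. *)

(* Defs.v *)
(* Equality of morphisms is Leibniz equality. *)

Set Implicit Arguments.
Unset Strict Implicit.

Record Category := {
  Obj :> Type;
  Hom : Obj -> Obj -> Type;
  idm : forall A, Hom A A;
  comp : forall A B C, Hom B C -> Hom A B -> Hom A C;
  comp_id_l : forall A B (f : Hom A B), comp (idm B) f = f;
  comp_id_r : forall A B (f : Hom A B), comp f (idm A) = f;
  comp_assoc : forall A B C D (h : Hom C D) (g : Hom B C) (f : Hom A B),
      comp h (comp g f) = comp (comp h g) f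
}.

Arguments Hom {c} _ _.
Arguments idm {c} A.
Arguments comp {c A B C} _ _.

Notation "g ∘ f" := (comp g f) (at level 40, left associativity).

Definition is_iso (C : Category) (X Y : C) (h : Hom X Y) : Prop :=
  exists k : Hom Y X, k ∘ h = idm X /\ h ∘ k = idm Y.

Definition castHom (C : Category) (X X' Y Y' : C)
    (e1 : X = X') (e2 : Y = Y') (h : Hom X Y) : Hom X' Y' :=
  match e1 in _ = X1 return Hom X1 Y' with
  | eq_refl => match e2 in _ = Y1 return Hom X Y1 with
               | eq_refl => h
               end
  end.

Record Functor (C D : Category) := {
  fobj :> C -> D;
  fmap : forall X Y : C, Hom X Y -> Hom (fobj X) (fobj Y);
  fmap_id : forall X, fmap (idm X) = idm (fobj X);
  fmap_comp : forall X Y Z (g : Hom Y Z) (f : Hom X Y),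
      fmap (g ∘ f) = fmap g ∘ fmap f
}.

Arguments fmap {C D} f0 {X Y} _.

(* A ⊗ B = tens A B ; A ⊸ B = lhom A B (left internal hom,
   hom(A ⊗ X, B) ≅ hom(X, A ⊸ B)) ; B / C = rhom B C (right internal hom,
   hom(X ⊗ C, B) ≅ hom(X, B / C)). *)

Record MonClosedCat := {
  mcat :> Category;
  tens : mcat -> mcat -> mcat;
  tensm : forall A A' B B' : mcat,
      Hom A A' -> Hom B B' -> Hom (tens A B) (tens A' B');
  tensm_id : forall A B : mcat, tensm (idm A) (idm B) = idm (tens A B);
  tensm_comp : forall (A A' A'' B B' B'' : mcat)
      (f : Hom A A') (f' : Hom A' A'') (g : Hom B B') (g' : Hom B' B''),
      tensm (f' ∘ f) (g' ∘ g) = tensm f' g' ∘ tensm f g;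
  munit : mcat;
  assoc : forall A B C : mcat, Hom (tens (tens A B) C) (tens A (tens B C));
  assoc_inv : forall A B C : mcat, Hom (tens A (tens B C)) (tens (tens A B) C);
  assoc_inv_l : forall A B C : mcat, assoc_inv A B C ∘ assoc A B C = idm _;
  assoc_inv_r : forall A B C : mcat, assoc A B C ∘ assoc_inv A B C = idm _;
  assoc_nat : forall (A A' B B' C C' : mcat)
      (f : Hom A A') (g : Hom B B') (h : Hom C C'),
      tensm f (tensm g h) ∘ assoc A B C = assoc A' B' C' ∘ tensm (tensm f g) h;
  lunit : forall A : mcat, Hom (tens munit A) A;
  lunit_inv : forall A : mcat, Hom A (tens munit A);
  lunit_inv_l : forall A : mcat, lunit_inv A ∘ lunit A = idm _;
  lunit_inv_r : forall A : mcat, lunit A ∘ lunit_inv A = idm _;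
  lunit_nat : forall (A A' : mcat) (f : Hom A A'),
      f ∘ lunit A = lunit A' ∘ tensm (idm munit) f;
  runit : forall A : mcat, Hom (tens A munit) A;
  runit_inv : forall A : mcat, Hom A (tens A munit);
  runit_inv_l : forall A : mcat, runit_inv A ∘ runit A = idm _;
  runit_inv_r : forall A : mcat, runit A ∘ runit_inv A = idm _;
  runit_nat : forall (A A' : mcat) (f : Hom A A'),
      f ∘ runit A = runit A' ∘ tensm f (idm munit);
  pentagon : forall A B C D : mcat,
      tensm (idm A) (assoc B C D) ∘ assoc A (tens B C) D
        ∘ tensm (assoc A B C) (idm D)
      = assoc A B (tens C D) ∘ assoc (tens A B) C D;
  triangle : forall A B : mcat,
      tensm (idm A) (lunit B) ∘ assoc A munit B = tensm (runit A) (idm B);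
  lhom : mcat -> mcat -> mcat;
  leval : forall A B : mcat, Hom (tens A (lhom A B)) B;
  lcurry : forall A B X : mcat, Hom (tens A X) B -> Hom X (lhom A B);
  lcurry_beta : forall (A B X : mcat) (h : Hom (tens A X) B),
      leval A B ∘ tensm (idm A) (lcurry h) = h;
  lcurry_eta : forall (A B X : mcat) (k : Hom X (lhom A B)),
      lcurry (leval A B ∘ tensm (idm A) k) = k;
  rhom : mcat -> mcat -> mcat;
  reval : forall B C : mcat, Hom (tens (rhom B C) C) B;
  rcurry : forall B C X : mcat, Hom (tens X C) B -> Hom X (rhom B C);
  rcurry_beta : forall (B C X : mcat) (h : Hom (tens X C) B),
      reval B C ∘ tensm (rcurry h) (idm C) = h;
  rcurry_eta : forall (B C X : mcat) (k : Hom X (rhom B C)),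
      rcurry (reval B C ∘ tensm k (idm C)) = k
}.

Arguments tens {m} _ _.
Arguments tensm {m A A' B B'} _ _.
Arguments munit {m}.
Arguments assoc {m} A B C.
Arguments lunit {m} A.
Arguments runit {m} A.
Arguments lhom {m} _ _.
Arguments leval {m} A B.
Arguments lcurry {m A B X} _.
Arguments rhom {m} _ _.
Arguments reval {m} B C.
Arguments rcurry {m B C X} _.

Definition curry (C : MonClosedCat) (A B : C) (f : Hom A B)
  : Hom munit (lhom A B) := lcurry (f ∘ runit A).

Definition eval (C : MonClosedCat) (A B : C) : Hom (tens A (lhom A B)) B :=
  leval A B.

Definition dni (C : MonClosedCat) (A B : C) : Hom A (rhom B (lhom A B)) :=
  rcurry (eval A B).

(* Monoidal closed refinement systems: functors preserving the monoidal
   closed structure up to coherent isomorphism, i.e. strong monoidal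
   functors (invertible coherent mu, eps) whose canonical closed
   comparison maps p(X ⊸ Y) -> pX ⊸ pY and p(X / Y) -> pX / pY are
   invertible. *)

Definition lcomp_map (E B : MonClosedCat) (p : Functor E B)
  (mu : forall X Y : E, Hom (tens (p X) (p Y)) (p (tens X Y))) (X Y : E)
  : Hom (p (lhom X Y)) (lhom (p X) (p Y)) :=
  lcurry (fmap p (leval X Y) ∘ mu X (lhom X Y)).

Definition rcomp_map (E B : MonClosedCat) (p : Functor E B)
  (mu : forall X Y : E, Hom (tens (p X) (p Y)) (p (tens X Y))) (X Y : E)
  : Hom (p (rhom X Y)) (rhom (p X) (p Y)) :=
  rcurry (fmap p (reval X Y) ∘ mu (rhom X Y) Y).

Record MCRefSys (E B : MonClosedCat) := {
  rfun :> Functor E B;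
  mu : forall X Y : E, Hom (tens (rfun X) (rfun Y)) (rfun (tens X Y));
  mu_inv : forall X Y : E, Hom (rfun (tens X Y)) (tens (rfun X) (rfun Y));
  mu_inv_l : forall X Y : E, mu_inv X Y ∘ mu X Y = idm _;
  mu_inv_r : forall X Y : E, mu X Y ∘ mu_inv X Y = idm _;
  mu_nat : forall (X X' Y Y' : E) (f : Hom X X') (g : Hom Y Y'),
      fmap rfun (tensm f g) ∘ mu X Y = mu X' Y' ∘ tensm (fmap rfun f) (fmap rfun g);
  eps : Hom (@munit B) (rfun munit);
  eps_inv : Hom (rfun munit) (@munit B);
  eps_inv_l : eps_inv ∘ eps = idm _;
  eps_inv_r : eps ∘ eps_inv = idm _;
  mu_assoc : forall X Y Z : E,
      fmap rfun (assoc X Y Z) ∘ mu (tens X Y) Z ∘ tensm (mu X Y) (idm (rfun Z))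
      = mu X (tens Y Z) ∘ tensm (idm (rfun X)) (mu Y Z)
          ∘ assoc (rfun X) (rfun Y) (rfun Z);
  mu_lunit : forall X : E,
      fmap rfun (lunit X) ∘ mu munit X ∘ tensm eps (idm (rfun X)) = lunit (rfun X);
  mu_runit : forall X : E,
      fmap rfun (runit X) ∘ mu X munit ∘ tensm (idm (rfun X)) eps = runit (rfun X);
  lcomp_inv : forall X Y : E, Hom (lhom (rfun X) (rfun Y)) (rfun (lhom X Y));
  lcomp_inv_l : forall X Y : E, lcomp_inv X Y ∘ lcomp_map mu X Y = idm _;
  lcomp_inv_r : forall X Y : E, lcomp_map mu X Y ∘ lcomp_inv X Y = idm _;
  rcomp_inv : forall X Y : E, Hom (rhom (rfun X) (rfun Y)) (rfun (rhom X Y));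
  rcomp_inv_l : forall X Y : E, rcomp_inv X Y ∘ rcomp_map mu X Y = idm _;
  rcomp_inv_r : forall X Y : E, rcomp_map mu X Y ∘ rcomp_inv X Y = idm _
}.

Arguments mu_inv {E B} m X Y.
Arguments eps_inv {E B} m.
Arguments rcomp_inv {E B} m X Y.

Section Fib.
Variables (E B : Category) (p : Functor E B).

Definition opcartesian (R X : E) (u : Hom R X) : Prop :=
  forall (Y : E) (v : Hom R Y) (h : Hom (p X) (p Y)),
    h ∘ fmap p u = fmap p v ->
    exists! w : Hom X Y, fmap p w = h /\ w ∘ u = v.

Definition cartesian (X S : E) (u : Hom X S) : Prop :=
  forall (Y : E) (v : Hom Y S) (h : Hom (p Y) (p X)),
    fmap p u ∘ h = fmap p v ->
    exists! w : Hom Y X, fmap p w = h /\ u ∘ w = v.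

Definition is_push (R : E) (Bo : B) (g : Hom (p R) Bo)
    (X : E) (eX : p X = Bo) (u : Hom R X) : Prop :=
  opcartesian u /\ castHom eq_refl eX (fmap p u) = g.

Definition is_pull (S : E) (Ao : B) (g : Hom Ao (p S))
    (X : E) (eX : p X = Ao) (u : Hom X S) : Prop :=
  cartesian u /\ castHom eX eq_refl (fmap p u) = g.

Definition bifibration : Prop :=
  (forall (R : E) (Bo : B) (g : Hom (p R) Bo),
      exists (X : E) (eX : p X = Bo) (u : Hom R X), is_push g eX u) /\
  (forall (S : E) (Ao : B) (g : Hom Ao (p S)),
      exists (X : E) (eX : p X = Ao) (u : Hom X S), is_pull g eX u).

Definition vert_iso (Bo : B) (X Y : E) (eX : p X = Bo) (eY : p Y = Bo)
    (w : Hom X Y) : Prop :=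
  is_iso w /\ castHom eX eY (fmap p w) = idm Bo.

End Fib.

Arguments opcartesian {E B} p {R X} u.
Arguments cartesian {E B} p {X S} u.
Arguments is_push {E B} p {R Bo} g {X} eX u.
Arguments is_pull {E B} p {S Ao} g {X} eX u.
Arguments bifibration {E B} p.
Arguments vert_iso {E B} p {Bo X Y} eX eY w.

(* Main.v *)
Require Import Defs.
From Stdlib Require Import ProofIrrelevance.
Set Implicit Arguments.
Unset Strict Implicit.

Definition ec (C : Category) (X Y : C) (e : X = Y) : Hom X Y :=
  match e in _ = Y1 return Hom X Y1 with eq_refl => idm X end.

Lemma ec_sym_l (C : Category) (X Y : C) (e : X = Y) : ec (eq_sym e) ∘ ec e = idm X.
Proof. destruct e; simpl; apply comp_id_l. Qed.
Lemma ec_sym_r (C : Category) (X Y : C) (e : X = Y) : ec e ∘ ec (eq_sym e) = idm Y.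
Proof. destruct e; simpl; apply comp_id_l. Qed.
Lemma ec_symsym (C : Category) (X Y : C) (e : X = Y) : ec (eq_sym (eq_sym e)) = ec e.
Proof. destruct e; reflexivity. Qed.
Lemma castHom_ec (C : Category) (X X' Y Y' : C) (e1 : X = X') (e2 : Y = Y') (h : Hom X Y) :
  castHom e1 e2 h = ec e2 ∘ h ∘ ec (eq_sym e1).
Proof. destruct e1, e2; simpl; rewrite comp_id_l, comp_id_r; reflexivity. Qed.

Lemma cancel_l (C : Category) (X Y Z : C) (a : Hom Y Z) (b : Hom Z Y) (f : Hom X Y) :
  b ∘ a = idm Y -> b ∘ (a ∘ f) = f.
Proof. intro H. rewrite comp_assoc, H, comp_id_l. reflexivity. Qed.

Lemma tensm_idl (C : MonClosedCat) (A B B' B'' : C) (g : Hom B B') (g' : Hom B' B'') :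
  tensm (idm A) (g' ∘ g) = tensm (idm A) g' ∘ tensm (idm A) g.
Proof. rewrite <- tensm_comp, comp_id_l. reflexivity. Qed.
Lemma tensm_idr (C : MonClosedCat) (A A' A'' B : C) (g : Hom A A') (g' : Hom A' A'') :
  tensm (g' ∘ g) (idm B) = tensm g' (idm B) ∘ tensm g (idm B).
Proof. rewrite <- tensm_comp, comp_id_l. reflexivity. Qed.
Lemma tensm_split (C : MonClosedCat) (A A' B B' : C) (f : Hom A A') (g : Hom B B') :
  tensm f g = tensm f (idm B') ∘ tensm (idm A) g.
Proof. rewrite <- tensm_comp, comp_id_l, comp_id_r. reflexivity. Qed.
Lemma tensm_split' (C : MonClosedCat) (A A' B B' : C) (f : Hom A A') (g : Hom B B') :
  tensm f g = tensm (idm A') g ∘ tensm f (idm B).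
Proof. rewrite <- tensm_comp, comp_id_l, comp_id_r. reflexivity. Qed.

Lemma lcurry_nat (C : MonClosedCat) (A B X X' : C) (h : Hom (tens A X) B) (m : Hom X' X) :
  lcurry h ∘ m = lcurry (h ∘ tensm (idm A) m).
Proof.
  rewrite <- (lcurry_eta (lcurry h ∘ m)). rewrite tensm_idl, comp_assoc, lcurry_beta. reflexivity.
Qed.
Lemma rcurry_nat (C : MonClosedCat) (B Cc X X' : C) (h : Hom (tens X Cc) B) (m : Hom X' X) :
  rcurry h ∘ m = rcurry (h ∘ tensm m (idm Cc)).
Proof.
  rewrite <- (rcurry_eta (rcurry h ∘ m)). rewrite tensm_idr, comp_assoc, rcurry_beta. reflexivity.
Qed.

Lemma ec_lhom_lcurry (C : MonClosedCat) (A A' B B' X : C) (a : A = A') (b : B = B')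
  (h : Hom (tens A X) B) :
  ec (f_equal2 lhom a b) ∘ lcurry h = lcurry (ec b ∘ h ∘ tensm (ec (eq_sym a)) (idm X)).
Proof. destruct a, b; rewrite ?(proof_irrelevance _ (f_equal2 _ eq_refl eq_refl) eq_refl); cbn. rewrite tensm_id, !comp_id_l, comp_id_r. reflexivity. Qed.

Lemma leval_ec (C : MonClosedCat) (A A' B B' : C) (a : A = A') (b : B = B') :
  leval A' B' ∘ tensm (idm A') (ec (f_equal2 lhom a b))
  = ec b ∘ leval A B ∘ tensm (ec (eq_sym a)) (idm _).
Proof. destruct a, b; rewrite ?(proof_irrelevance _ (f_equal2 _ eq_refl eq_refl) eq_refl); cbn. rewrite !tensm_id, comp_id_l, !comp_id_r. reflexivity. Qed.

Lemma reval_ec (C : MonClosedCat) (B B' Cc Cc' : C) (a : B = B') (b : Cc = Cc') :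
  reval B' Cc' ∘ tensm (ec (f_equal2 rhom a b)) (ec b) = ec a ∘ reval B Cc.
Proof. destruct a, b; rewrite ?(proof_irrelevance _ (f_equal2 _ eq_refl eq_refl) eq_refl); cbn. rewrite tensm_id, comp_id_l, comp_id_r. reflexivity. Qed.

Lemma ec_tens_sym (C : MonClosedCat) (A A' B B' : C) (a : A = A') (b : B = B') :
  ec (eq_sym (f_equal2 tens a b)) = tensm (ec (eq_sym a)) (ec (eq_sym b)).
Proof. destruct a, b; rewrite ?(proof_irrelevance _ (f_equal2 _ eq_refl eq_refl) eq_refl); cbn. rewrite tensm_id. reflexivity. Qed.

Lemma runit_inv_nat (C : MonClosedCat) (A A' : C) (f : Hom A A') :
  runit_inv A' ∘ f = tensm f (idm munit) ∘ runit_inv A.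
Proof.
  rewrite <- (comp_id_r (runit_inv A' ∘ f)), <- (runit_inv_r A).
  rewrite !comp_assoc, <- (comp_assoc _ f), runit_nat, comp_assoc, runit_inv_l, comp_id_l.
  reflexivity.
Qed.

Lemma ec_rhom_rcurry (C : MonClosedCat) (B B' Cc Cc' X : C) (a : B = B') (b : Cc = Cc')
  (h : Hom (tens X Cc) B) :
  ec (f_equal2 rhom a b) ∘ rcurry h = rcurry (ec a ∘ h ∘ tensm (idm X) (ec (eq_sym b))).
Proof. destruct a, b; rewrite ?(proof_irrelevance _ (f_equal2 _ eq_refl eq_refl) eq_refl); cbn. rewrite tensm_id, !comp_id_l, comp_id_r. reflexivity. Qed.

Lemma p_runit_mu (E Bc : MonClosedCat) (p : MCRefSys E Bc) (Z : E) :
  fmap p (runit Z) ∘ mu p Z munit = runit (p Z) ∘ tensm (idm _) (eps_inv p).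
Proof.
  rewrite <- (mu_runit p Z), <- !comp_assoc, <- tensm_idl, eps_inv_r, tensm_id, comp_id_r.
  reflexivity.
Qed.

Lemma p_runit_inv (E Bc : MonClosedCat) (p : MCRefSys E Bc) (Z : E) :
  fmap p (runit_inv Z) = mu p Z munit ∘ tensm (idm _) (eps p) ∘ runit_inv (p Z).
Proof.
  assert (H : fmap p (runit_inv Z) ∘ fmap p (runit Z) = idm _)
    by (rewrite <- fmap_comp, runit_inv_l, fmap_id; reflexivity).
  transitivity (fmap p (runit_inv Z) ∘ (runit (p Z) ∘ runit_inv (p Z))).
  - rewrite runit_inv_r, comp_id_r. reflexivity.
  - rewrite <- (mu_runit p Z). rewrite !comp_assoc, H, comp_id_l. reflexivity.
Qed.

Lemma p_tensm (E Bc : MonClosedCat) (p : MCRefSys E Bc) (X X' Y Y' : E)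
  (f : Hom X X') (g : Hom Y Y') :
  fmap p (tensm f g) = mu p X' Y' ∘ tensm (fmap p f) (fmap p g) ∘ mu_inv p X Y.
Proof.
  rewrite <- (mu_nat p), <- comp_assoc, mu_inv_r, comp_id_r. reflexivity.
Qed.

Lemma p_lcurry (E Bc : MonClosedCat) (p : MCRefSys E Bc) (X Y Z : E)
  (h : Hom (tens X Z) Y) :
  fmap p (lcurry h) = lcomp_inv p X Y ∘ lcurry (fmap p h ∘ mu p X Z).
Proof.
  assert (H : lcomp_map (mu p) X Y ∘ fmap p (lcurry h) = lcurry (fmap p h ∘ mu p X Z)).
  { unfold lcomp_map. rewrite lcurry_nat. f_equal.
    rewrite <- comp_assoc, <- (fmap_id p X), <- mu_nat, comp_assoc, <- fmap_comp, lcurry_beta.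
    reflexivity. }
  rewrite <- H, comp_assoc, lcomp_inv_l, comp_id_l. reflexivity.
Qed.

Lemma p_rcurry (E Bc : MonClosedCat) (p : MCRefSys E Bc) (X Y Z : E)
  (h : Hom (tens X Z) Y) :
  fmap p (rcurry h) = rcomp_inv p Y Z ∘ rcurry (fmap p h ∘ mu p X Z).
Proof.
  assert (H : rcomp_map (mu p) Y Z ∘ fmap p (rcurry h) = rcurry (fmap p h ∘ mu p X Z)).
  { unfold rcomp_map. rewrite rcurry_nat. f_equal.
    rewrite <- comp_assoc, <- (fmap_id p Z), <- mu_nat, comp_assoc, <- fmap_comp, rcurry_beta.
    reflexivity. }
  rewrite <- H, comp_assoc, rcomp_inv_l, comp_id_l. reflexivity.
Qed.

Lemma p_leval (E Bc : MonClosedCat) (p : MCRefSys E Bc) (X Y : E) :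
  fmap p (leval X Y) ∘ mu p X (lhom X Y)
  = leval (p X) (p Y) ∘ tensm (idm _) (lcomp_map (mu p) X Y).
Proof. unfold lcomp_map. rewrite lcurry_beta. reflexivity. Qed.

Lemma p_reval (E Bc : MonClosedCat) (p : MCRefSys E Bc) (X Y : E) :
  fmap p (reval X Y) ∘ mu p (rhom X Y) Y
  = reval (p X) (p Y) ∘ tensm (rcomp_map (mu p) X Y) (idm _).
Proof. unfold rcomp_map. rewrite rcurry_beta. reflexivity. Qed.

Lemma sep (E Bc : MonClosedCat) (p : MCRefSys E Bc) (Gr : E) (uG : Hom munit Gr)
  (Hop : opcartesian p uG) (Z T : E) (a b : Hom (tens Z Gr) T) :
  fmap p a = fmap p b -> a ∘ tensm (idm Z) uG = b ∘ tensm (idm Z) uG -> a = b.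
Proof.
  intros Hpab Hab.
  destruct (Hop (lhom Z T) (lcurry b ∘ uG) (fmap p (lcurry b))) as [w [_ Hu]].
  { rewrite fmap_comp; reflexivity. }
  assert (H : lcurry a = lcurry b).
  { transitivity w; [symmetry|]; apply Hu; split.
    - rewrite !p_lcurry, Hpab. reflexivity.
    - rewrite !lcurry_nat, Hab. reflexivity.
    - reflexivity.
    - reflexivity. }
  rewrite <- (lcurry_beta a), <- (lcurry_beta b), H. reflexivity.
Qed.

Lemma graph (E Bc : MonClosedCat) (p : MCRefSys E Bc) (A B : Bc) (f : Hom A B)
  (G : E) (eG : p G = lhom A B) (uG : Hom munit G)
  (HG : is_push p (curry f ∘ eps_inv p) eG uG)
  (Z T : E) (eZ : p Z = A) (eT : p T = B) (u : Hom Z T)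
  (Hu : fmap p u = ec (eq_sym eT) ∘ f ∘ ec eZ) :
  exists k : Hom (tens Z G) T, k ∘ tensm (idm Z) uG = u ∘ runit Z /\
    fmap p k = ec (eq_sym eT) ∘ eval A B ∘ tensm (ec eZ) (ec eG) ∘ mu_inv p Z G.
Proof.
  destruct HG as [Hop HpG]. rewrite castHom_ec in HpG. simpl in HpG.
  rewrite comp_id_r in HpG.
  assert (HpG' : fmap p uG = ec (eq_sym eG) ∘ curry f ∘ eps_inv p).
  { rewrite <- comp_assoc, <- HpG, comp_assoc, ec_sym_l, comp_id_l. reflexivity. }
  pose (g := ec (f_equal2 lhom (eq_sym eZ) (eq_sym eT)) ∘ ec eG).
  destruct (Hop (lhom Z T) (lcurry (u ∘ runit Z)) (lcomp_inv p Z T ∘ g)) as [w [[Hw1 Hw2] _]].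
  { rewrite p_lcurry, HpG', fmap_comp, Hu, <- !comp_assoc. f_equal. unfold g.
    rewrite <- !comp_assoc, (cancel_l _ (ec_sym_r eG)).
    unfold curry. rewrite comp_assoc, ec_lhom_lcurry, lcurry_nat. f_equal.
    rewrite ec_symsym, p_runit_mu, <- !comp_assoc.
    rewrite (comp_assoc (ec eZ) (runit (p Z))), runit_nat, <- !comp_assoc. reflexivity. }
  exists (leval Z T ∘ tensm (idm Z) w). split.
  - rewrite <- comp_assoc, <- tensm_idl, Hw2, lcurry_beta. reflexivity.
  - rewrite fmap_comp, p_tensm, Hw1, fmap_id, !comp_assoc, p_leval.
    rewrite <- (comp_assoc (leval (p Z) (p T))), <- tensm_idl, comp_assoc, lcomp_inv_r, comp_id_l.
    unfold g. rewrite tensm_idl, comp_assoc, leval_ec, ec_symsym.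
    rewrite (tensm_split (ec eZ) (ec eG)). unfold eval. rewrite <- !comp_assoc. reflexivity.
Qed.

Lemma pushG (E Bc : MonClosedCat) (p : MCRefSys E Bc) (A B : Bc) (f : Hom A B)
  (G : E) (eG : p G = lhom A B) (uG : Hom munit G)
  (HG : is_push p (curry f ∘ eps_inv p) eG uG) :
  fmap p uG = ec (eq_sym eG) ∘ curry f ∘ eps_inv p.
Proof.
  destruct HG as [Hop HpG]. rewrite castHom_ec in HpG. simpl in HpG.
  rewrite comp_id_r in HpG.
  rewrite <- comp_assoc, <- HpG, comp_assoc, ec_sym_l, comp_id_l. reflexivity.
Qed.

Lemma part1 (E Bc : MonClosedCat) (p : MCRefSys E Bc) (A B : Bc) (f : Hom A B)
  (G : E) (eG : p G = lhom A B) (uG : Hom munit G)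
  (HG : is_push p (curry f ∘ eps_inv p) eG uG)
  (R : E) (eR : p R = A)
  (X : E) (eX : p X = B) (uX : Hom R X) (HopX : opcartesian p uX)
  (HuX : fmap p uX = ec (eq_sym eX) ∘ f ∘ ec eR)
  (Y : E) (eY : p Y = B) (uY : Hom (tens R G) Y) (HopY : opcartesian p uY)
  (HuY : fmap p uY = ec (eq_sym eY) ∘ eval A B ∘ tensm (ec eR) (ec eG) ∘ mu_inv p R G) :
  exists w : Hom X Y, vert_iso p eX eY w.
Proof.
  pose proof (pushG HG) as HpG.
  destruct (graph HG HuX) as [k [Hk1 Hk2]].
  destruct (HopX Y (uY ∘ tensm (idm R) uG ∘ runit_inv R) (ec (eq_sym eY) ∘ ec eX))
    as [w [[Hw1 Hw2] _]].
  { rewrite !fmap_comp, HuX, HuY, p_tensm, p_runit_inv, fmap_id, HpG.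
    rewrite <- !comp_assoc.
    rewrite (cancel_l _ (ec_sym_r eX)), (cancel_l _ (mu_inv_l p R G)), (cancel_l _ (mu_inv_l p R munit)).
    f_equal.
    rewrite (comp_assoc (tensm (idm _) _) (tensm (idm _) (eps p))), <- tensm_idl, <- !comp_assoc, eps_inv_l, comp_id_r.
    rewrite (comp_assoc (tensm (ec eR) (ec eG))), <- tensm_comp, comp_id_r, (cancel_l _ (ec_sym_r eG)).
    rewrite (tensm_split' (ec eR) (curry f)), !comp_assoc. unfold eval, curry. rewrite lcurry_beta.
    rewrite <- (comp_assoc f), <- runit_nat, <- !comp_assoc, runit_inv_r, comp_id_r. reflexivity. }
  destruct (HopY X k (ec (eq_sym eX) ∘ ec eY)) as [w' [[Hw'1 Hw'2] _]].
  { rewrite HuY, Hk2, <- !comp_assoc, (cancel_l _ (ec_sym_r eY)). reflexivity. }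
  exists w. split.
  - exists w'. split.
    + destruct (HopX X uX (idm (p X))) as [z [_ Hz]]. { apply comp_id_l. }
      transitivity z; [symmetry|]; apply Hz; split.
      * rewrite fmap_comp, Hw'1, Hw1, <- !comp_assoc, (cancel_l _ (ec_sym_r eY)), ec_sym_l.
        reflexivity.
      * rewrite <- comp_assoc, Hw2, !comp_assoc, Hw'2, Hk1, <- comp_assoc, runit_inv_r, comp_id_r.
        reflexivity.
      * apply fmap_id.
      * apply comp_id_l.
    + destruct (HopY Y uY (idm (p Y))) as [z [_ Hz]]. { apply comp_id_l. }
      transitivity z; [symmetry|]; apply Hz; split.
      * rewrite fmap_comp, Hw1, Hw'1, <- !comp_assoc, (cancel_l _ (ec_sym_r eX)), ec_sym_l.
        reflexivity.
      * rewrite <- comp_assoc, Hw'2. apply (sep (proj1 HG)).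
        -- rewrite fmap_comp, Hw1, Hk2, HuY, <- !comp_assoc, (cancel_l _ (ec_sym_r eX)). reflexivity.
        -- rewrite <- comp_assoc, Hk1, comp_assoc, Hw2, <- !comp_assoc, runit_inv_l, comp_id_r.
           reflexivity.
      * apply fmap_id.
      * apply comp_id_l.
  - rewrite castHom_ec, Hw1, <- !comp_assoc, (cancel_l _ (ec_sym_r eY)), ec_sym_r. reflexivity.
Qed.

Lemma part2 (E Bc : MonClosedCat) (p : MCRefSys E Bc) (A B : Bc) (f : Hom A B)
  (G : E) (eG : p G = lhom A B) (uG : Hom munit G)
  (HG : is_push p (curry f ∘ eps_inv p) eG uG)
  (S : E) (eS : p S = B)
  (X : E) (eX : p X = A) (uX : Hom X S) (HcX : cartesian p uX)
  (HuX : fmap p uX = ec (eq_sym eS) ∘ f ∘ ec eX)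
  (Y : E) (eY : p Y = A) (uY : Hom Y (rhom S G)) (HcY : cartesian p uY)
  (HuY : fmap p uY = rcomp_inv p S G ∘ ec (f_equal2 rhom (eq_sym eS) (eq_sym eG))
                     ∘ dni A B ∘ ec eY) :
  exists w : Hom X Y, vert_iso p eX eY w.
Proof.
  pose proof (pushG HG) as HpG.
  destruct (graph HG HuX) as [k [Hk1 Hk2]].
  destruct (HcY X (rcurry k) (ec (eq_sym eY) ∘ ec eX)) as [w1 [[Hw1a Hw1b] _]].
  { rewrite HuY, p_rcurry, Hk2, <- !comp_assoc, (cancel_l _ (ec_sym_r eY)).
    f_equal. rewrite mu_inv_l, comp_id_r. unfold dni. rewrite comp_assoc, ec_rhom_rcurry, rcurry_nat.
    f_equal. rewrite ec_symsym, (tensm_split' (ec eX) (ec eG)). unfold eval.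
    rewrite <- !comp_assoc. reflexivity. }
  destruct (HcX Y (reval S G ∘ tensm uY uG ∘ runit_inv Y) (ec (eq_sym eX) ∘ ec eY))
    as [w2 [[Hw2a Hw2b] _]].
  { rewrite !fmap_comp, HuX, p_tensm, p_runit_inv, HuY, HpG.
    rewrite <- !comp_assoc, (cancel_l _ (ec_sym_r eX)), (cancel_l _ (mu_inv_l p Y munit)).
    rewrite (comp_assoc (fmap p (reval S G))), p_reval.
    rewrite (comp_assoc (tensm _ _) (tensm (idm _) (eps p))), <- tensm_comp, comp_id_r.
    rewrite <- (comp_assoc (reval _ _)), (comp_assoc (tensm (rcomp_map _ _ _) _)), <- tensm_comp, comp_id_l.
    rewrite (cancel_l _ (rcomp_inv_r p S G)), <- !comp_assoc, eps_inv_l, comp_id_r.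
    rewrite (tensm_comp (dni A B ∘ ec eY) (ec (f_equal2 rhom (eq_sym eS) (eq_sym eG)))
               (curry f) (ec (eq_sym eG))).
    rewrite !comp_assoc, reval_ec.
    assert (Ht : tensm (dni A B ∘ ec eY) (curry f)
                 = tensm (dni A B) (idm _) ∘ (tensm (idm _) (curry f) ∘ tensm (ec eY) (idm _))).
    { rewrite <- !tensm_comp, !comp_id_l, comp_id_r. reflexivity. }
    rewrite Ht, !comp_assoc.
    rewrite <- (comp_assoc (ec (eq_sym eS)) (reval _ _)). unfold dni. rewrite rcurry_beta.
    rewrite <- (comp_assoc (ec (eq_sym eS)) (eval _ _)). unfold eval, curry. rewrite lcurry_beta.
    rewrite <- !comp_assoc, (comp_assoc (runit A)), <- runit_nat, <- comp_assoc, runit_inv_r, comp_id_r.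
    reflexivity. }
  exists w1. split.
  - exists w2. split.
    + destruct (HcX X uX (idm (p X))) as [z [_ Hz]]. { apply comp_id_r. }
      transitivity z; [symmetry|]; apply Hz; split.
      * rewrite fmap_comp, Hw2a, Hw1a, <- !comp_assoc, (cancel_l _ (ec_sym_r eY)), ec_sym_l.
        reflexivity.
      * rewrite comp_assoc, Hw2b, <- comp_assoc, runit_inv_nat.
        rewrite <- comp_assoc, (comp_assoc (tensm uY uG)), <- tensm_comp, comp_id_r, Hw1b.
        rewrite (tensm_split (rcurry k) uG), !comp_assoc, rcurry_beta, Hk1, <- comp_assoc,
          runit_inv_r, comp_id_r.
        reflexivity.
      * apply fmap_id.
      * apply comp_id_r.
    + destruct (HcY Y uY (idm (p Y))) as [z [_ Hz]]. { apply comp_id_r. }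
      transitivity z; [symmetry|]; apply Hz; split.
      * rewrite fmap_comp, Hw1a, Hw2a, <- !comp_assoc, (cancel_l _ (ec_sym_r eX)), ec_sym_l.
        reflexivity.
      * rewrite comp_assoc, Hw1b, rcurry_nat, <- (rcurry_eta uY). f_equal.
        apply (sep (proj1 HG)).
        -- rewrite !fmap_comp, !p_tensm, Hk2, Hw2a, HuY, !fmap_id, <- !comp_assoc.
           rewrite (cancel_l _ (mu_inv_l p X G)).
           rewrite (comp_assoc (fmap p (reval S G))), p_reval.
           rewrite <- comp_assoc, (comp_assoc (tensm (rcomp_map _ _ _) _)), <- tensm_comp, comp_id_l.
           rewrite (cancel_l _ (rcomp_inv_r p S G)).
           rewrite (comp_assoc (tensm (ec eX) _)), <- tensm_comp, comp_id_r, (cancel_l _ (ec_sym_r eX)).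
           rewrite <- (ec_sym_r (eq_sym eG)), tensm_comp, !comp_assoc, reval_ec, ec_symsym.
           assert (Ht : tensm (dni A B ∘ ec eY) (ec eG)
                        = tensm (dni A B) (idm _) ∘ tensm (ec eY) (ec eG)).
           { rewrite <- tensm_comp, comp_id_l. reflexivity. }
           rewrite Ht. unfold dni, eval. rewrite !comp_assoc, <- (comp_assoc (ec (eq_sym eS)) (reval _ _)), rcurry_beta.
           rewrite <- !comp_assoc. reflexivity.
        -- rewrite <- comp_assoc, <- (tensm_split w2 uG), (tensm_split' w2 uG), comp_assoc, Hk1.
           rewrite <- comp_assoc, <- runit_nat, comp_assoc, Hw2b, <- comp_assoc, runit_inv_l, comp_id_r.
           rewrite <- comp_assoc, <- tensm_split. reflexivity.
      * apply fmap_id.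
      * apply comp_id_r.
  - rewrite castHom_ec, Hw1a, <- !comp_assoc, (cancel_l _ (ec_sym_r eY)), ec_sym_r. reflexivity.
Qed.

Lemma ec_move (C : Category) (X Y Z : C) (e : Y = Z) (x : Hom X Y) (y : Hom X Z) :
  ec e ∘ x = y -> x = ec (eq_sym e) ∘ y.
Proof. intro H. rewrite <- H, comp_assoc, ec_sym_l, comp_id_l. reflexivity. Qed.
Lemma ec_move_r (C : Category) (X Y Z : C) (e : X = Y) (x : Hom X Z) (y : Hom Y Z) :
  x ∘ ec (eq_sym e) = y -> x = y ∘ ec e.
Proof. intro H. rewrite <- H, <- comp_assoc, ec_sym_l, comp_id_r. reflexivity. Qed.

Theorem mainTheorem6 (E Bc : MonClosedCat) (p : MCRefSys E Bc)
  (Hbif : bifibration p)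
  (R S : E) (A B : Bc) (eR : p R = A) (eS : p S = B) (f : Hom A B)
  (G : E) (eG : p G = lhom A B) (uG : Hom (@munit E) G)
  (HG : is_push p (curry f ∘ eps_inv p) eG uG) :
  (forall (X : E) (eX : p X = B) (uX : Hom R X)
          (Y : E) (eY : p Y = B) (uY : Hom (tens R G) Y),
     is_push p (castHom (eq_sym eR) eq_refl f) eX uX ->
     is_push p (castHom (f_equal2 tens (eq_sym eR) (eq_sym eG)) eq_refl
                        (eval A B) ∘ mu_inv p R G) eY uY ->
     exists w : Hom X Y, vert_iso p eX eY w)
  /\
  (forall (X : E) (eX : p X = A) (uX : Hom X S)
          (Y : E) (eY : p Y = A) (uY : Hom Y (rhom S G)),
     is_pull p (castHom eq_refl (eq_sym eS) f) eX uX ->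
     is_pull p (rcomp_inv p S G ∘
                castHom eq_refl (f_equal2 rhom (eq_sym eS) (eq_sym eG))
                        (dni A B)) eY uY ->
     exists w : Hom X Y, vert_iso p eX eY w).
Proof.
  split.
  - intros X eX uX Y eY uY [HopX HpX] [HopY HpY].
    rewrite !castHom_ec in HpX, HpY. simpl in HpX, HpY.
    rewrite comp_id_r, comp_id_l, ec_symsym in HpX.
    rewrite comp_id_r, comp_id_l, ec_tens_sym, !ec_symsym in HpY.
    apply ec_move in HpX. apply ec_move in HpY. rewrite ?comp_assoc in HpX. rewrite ?comp_assoc in HpY.
    exact (part1 HG HopX HpX HopY HpY).
  - intros X eX uX Y eY uY [HcX HpX] [HcY HpY].
    rewrite !castHom_ec in HpX, HpY. simpl in HpX, HpY.
    rewrite !comp_id_r, comp_id_l in HpX.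
    rewrite !comp_id_r, comp_id_l in HpY.
    apply ec_move_r in HpX. apply ec_move_r in HpY. rewrite ?comp_assoc in HpX. rewrite ?comp_assoc in HpY.
    exact (part2 HG HcX HpX HcY HpY).
Qed.
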